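(* Let $G=(V,E)$ be an $(n-4)$-regular graph on $n>4$ nodes and let $\emptyset\ne V_i\subseteq V$ with $|V_i|=t_in$. Then $n(n-4)\,\mathsf M(V_i)\le (4t_i^2-t_i)\,n$. In particular, if $|V_i|\le n/4$ then $\mathsf M(V_i)\le 0$, and if $|V_i|=(\frac14+\delta)n$ with $\delta>0$ then $n(n-4)\mathsf M(V_i)\le(4\delta^2+\delta)n$.
   Context: For a finite simple undirected graph $G=(V,E)$ with $m=|E|\ge1$ edges, degrees $d_v$, and $a_{u,v}=1$ if $\{u,v\}\in E$ and $0$ otherwise: for $C\subseteq V$, $\mathsf M(C)=\frac{1}{2m}\sum_{u\in C}\sum_{v\in C}\big(a_{u,v}-\frac{d_ud_v}{2m}\big)$, the sum over all ordered pairs including $u=v$. *)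

(* Defs.v *)
From HB Require Import structures.
From mathcomp Require Import all_boot all_order all_algebra.
Set Implicit Arguments. Unset Strict Implicit. Unset Printing Implicit Defensive.
Import Order.TTheory GRing.Theory Num.Theory.
Local Open Scope ring_scope.

(* A finite simple undirected graph is a symmetric irreflexive relation
   e : rel T on a finite vertex type T. *)

Definition edges (T : finType) (e : rel T) : {set {set T}} :=
  [set A : {set T} | [exists u, exists v, e u v && (A == [set u; v])]].

Definition nedges (T : finType) (e : rel T) : nat := #|edges e|.

Definition deg (T : finType) (e : rel T) (v : T) : nat := #|[set u | e v u]|.

Definition adj (R : numFieldType) (T : finType) (e : rel T) (u v : T) : R :=
  if e u v then 1 else 0.

Definition modularity (R : numFieldType) (T : finType) (e : rel T) (C : {set T}) : R :=
  let m2 : R := 2 * (nedges e)%:R in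
  m2^-1 * \sum_(u in C) \sum_(v in C)
     (adj R e u v - (deg e u)%:R * (deg e v)%:R / m2).

(* Main.v *)
Require Import Defs.
From HB Require Import structures.
From mathcomp Require Import all_boot all_order all_algebra.
Import Order.TTheory GRing.Theory Num.Theory.
Local Open Scope ring_scope.
Lemma handshake (T : finType) (e : rel T) (e_sym : symmetric e) (e_irr : irreflexive e) :
  (\sum_v deg e v = 2 * nedges e)%N.
Proof.
have -> : (\sum_v deg e v = \sum_p (e p.1 p.2 : nat))%N.
  rewrite -(pair_bigA _ (fun u v => (e u v : nat))); apply: eq_bigr => u _.
  rewrite /deg -sum1_card big_mkcond; apply: eq_bigr => v _.
  by rewrite inE; case: (e u v).
rewrite -big_mkcond /=.
rewrite (partition_big (fun p : T * T => [set p.1; p.2]) (mem (edges e))) /=; last first.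
  move=> [u v] /= huv; rewrite inE; apply/existsP; exists u; apply/existsP; exists v.
  by rewrite huv eqxx.
rewrite /nedges mulnC -sum_nat_const.
apply: eq_bigr => A; rewrite inE => /existsP [u /existsP [v /andP [huv /eqP ->]]].
have uv : u != v by apply: contraTneq huv => ->; rewrite e_irr.
rewrite (eq_bigl (mem [set (u, v); (v, u)])).
  rewrite sum1_card cards2.
  by rewrite xpair_eqE (negbTE uv).
move=> [a b] /=; rewrite !inE !xpair_eqE.
apply/idP/idP.
- move=> /andP [hab /eqP E].
  have ha : a \in [set u; v] by rewrite -E !inE eqxx.
  have hb : b \in [set u; v] by rewrite -E !inE eqxx orbT.
  have ab : a != b by apply: contraTneq hab => ->; rewrite e_irr.
  move: ha hb; rewrite !inE.
  case/orP=> /eqP ea; case/orP=> /eqP eb; subst.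
  + by rewrite eqxx in ab.
  + by rewrite !eqxx.
  + by rewrite !eqxx orbT.
  + by rewrite eqxx in ab.
- case/orP=> /andP [/eqP -> /eqP ->]; first by rewrite huv eqxx.
  by rewrite -e_sym huv setUC eqxx.
Qed.

Local Open Scope ring_scope.

Theorem lemma6 (R : realFieldType) (T : finType) (e : rel T)
  (e_sym : symmetric e) (e_irr : irreflexive e)
  (n_gt4 : (4 < #|T|)%N)
  (e_reg : forall v : T, deg e v = (#|T| - 4)%N)
  (C : {set T}) (C_nonempty : C != set0)
  (t : R) (ht : (#|C|)%:R = t * (#|T|)%:R) :
  let n : R := (#|T|)%:R in
  [/\ n * (n - 4) * modularity R e C <= (4 * t ^+ 2 - t) * n,
      ((#|C|)%:R <= n / 4 -> modularity R e C <= 0)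
    & (forall delta : R, 0 < delta ->
         (#|C|)%:R = (1 / 4 + delta) * n ->
         n * (n - 4) * modularity R e C <= (4 * delta ^+ 2 + delta) * n)].
Proof.
move=> n.
have n4 : (4 <= #|T|)%N by apply: ltnW.
have hdeg : forall v, (deg e v)%:R = n - 4 :> R by move=> v; rewrite e_reg natrB.
have hm : (2 * nedges e)%:R = n * (n - 4) :> R.
  rewrite -handshake // (eq_bigr (fun _ => (#|T| - 4)%N)) // sum_nat_const.
  by rewrite natrM natrB.
have {}hm : 2 * (nedges e)%:R = n * (n - 4) :> R by rewrite -hm natrM.
have npos : 0 < n by rewrite ltr0n; apply: leq_ltn_trans n_gt4.
have Dpos : 0 < n - 4 by rewrite subr_gt0 /n ltr_nat.
set D := n - 4.
have hD0 : D != 0 by rewrite (gt_eqF Dpos).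
have hn0 : n != 0 by rewrite (gt_eqF npos).
set c : R := (#|C|)%:R.
set S := \sum_(u in C) \sum_(v in C) adj R e u v.
have hK : D * D / (n * D) = D / n.
  by rewrite invfM [n^-1 * _]mulrC mulrA mulfK.
have E : forall u, \sum_(v in C) (adj R e u v - (deg e u)%:R * (deg e v)%:R / (n * (n-4)))
     = \sum_(v in C) adj R e u v - D / n * c.
  move=> u; rewrite sumrB; congr (_ - _).
  rewrite (eq_bigr (fun _ => D / n)); last by move=> v _; rewrite !hdeg hK.
  by rewrite sumr_const -mulr_natr.
have hM : n * D * modularity R e C = S - D / n * c * c.
  rewrite /modularity hm (eq_bigr _ (fun u _ => E u)).
  rewrite sumrB sumr_const -/S -[_ *+ #|C|]mulr_natr -/c.
  by rewrite mulrA mulfV ?mul1r // mulf_neq0.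
have hc : c = \sum_(v in C) (1:R) by rewrite sumr_const.
have hu : forall u, u \in C -> \sum_(v in C) adj R e u v <= c - 1.
  move=> u uC; rewrite hc [X in _ <= X - _](bigD1 u) //= [X in X <= _](bigD1 u) //=.
  rewrite {1}/adj e_irr add0r addrC addrK; apply: ler_sum => v _.
  by rewrite /adj; case: (e u v).
have hS : S <= c * c - c.
  apply: le_trans (ler_sum _ hu) _.
  by rewrite sumr_const -[_ *+ #|C|]mulr_natr -/c mulrBl mul1r mulrC.
have hct : c = t * n := ht.
have e1 : D / n * c * c = D * t * t * n.
  by rewrite hct [t * n]mulrC !mulrA divfK // mulrAC.
have e2 : (4 * t^+2 - t) * n = (c * c - c) - D * t * t * n.
  rewrite hct /D !mulrBl expr2 !mulrA.
  rewrite [n * t]mulrC [t * n * t]mulrAC opprB addrC addrA.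
  set X := t * t * n * n; set F := 4 * t * t * n; set Y := t * n.
  by rewrite addrAC (addrAC X) subrr add0r.
have P1 : n * D * modularity R e C <= (4 * t ^+ 2 - t) * n.
  by rewrite hM e1 e2 lerD2r.
have nD : 0 < n * D by rewrite mulr_gt0.
have h40 : (4:R) != 0 by rewrite pnatr_eq0.
split => //.
- move=> hcn.
  rewrite -(pmulr_rle0 _ nD); apply: le_trans P1 _.
  have ht' : t = c / n by rewrite hct mulfK.
  have t0 : 0 <= t by rewrite ht' divr_ge0 // ?ler0n // ltW.
  have e3 : (4 * t ^+ 2 - t) * n = t * (c * 4 - n).
    rewrite hct expr2 mulrBl mulrBr; congr (_ - _).
    by rewrite [t * n * 4]mulrC !mulrA [4 * t]mulrC.
  rewrite e3 mulr_ge0_le0 // subr_le0 -ler_pdivlMr //.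
- move=> delta dpos hcd.
  have htd : t = 1 / 4 + delta by apply: (mulIf hn0); rewrite -hct.
  have e4 : 4 * t ^+ 2 - t = 4 * delta ^+ 2 + delta.
    rewrite expr2 mulrA -{3}[t]mul1r -mulrBl.
    have -> : 4 * t - 1 = 4 * delta.
      by rewrite htd mulrDr div1r mulfV // addrAC subrr add0r.
    rewrite mulrC htd mulrDl div1r mulrA mulVf // mul1r addrC expr2.
    by rewrite mulrCA.
  by rewrite -e4.
Qed.
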